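(* Let $G$ be a quadrangulation, let $v$ be a vertex of $G$, and let $i$ be an integer with $1 \leq i \leq e(v)-1$, where $e(v)=\max_{u\in V(G)} d_G(v,u)$ is the eccentricity of $v$. Then for every active vertex $w \in N_i(v)$ there exists another active vertex $w' \in N_i(v)$, $w'\neq w$, such that $w$ and $w'$ lie on a common face of $G$.
   Context: A quadrangulation is a maximal bipartite planar graph, considered with a plane embedding; equivalently, a simple connected plane bipartite graph in which every face is bounded by a cycle of length $4$. For a vertex $v$ and an integer $i\ge 0$, $N_i(v)$ denotes the set of vertices at distance exactly $i$ from $v$. Given the fixed vertex $v$, a vertex in $N_i(v)$ is called active if it has a neighbour in $N_{i+1}(v)$. *)

(* Defs.v *)
From mathcomp Require Import all_boot.
Set Implicit Arguments. Unset Strict Implicit. Unset Printing Implicit Defensive.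

Section Quad.
Variables (V : finType) (e : rel V).

Definition dart := {p : V * V | e p.1 p.2}.
Definition tail (d : dart) : V := (val d).1.
Definition head (d : dart) : V := (val d).2.

Definition simple_graph : Prop := symmetric e /\ irreflexive e.

Lemma rev_dart_proof (esym : symmetric e) (d : dart) :
  e ((val d).2, (val d).1).1 ((val d).2, (val d).1).2.
Proof. by rewrite /= esym; exact: (valP d). Qed.

Definition rev_dart (esym : symmetric e) (d : dart) : dart :=
  @exist _ (fun p : V * V => e p.1 p.2) ((val d).2, (val d).1)
    (rev_dart_proof esym d).

Definition face_succ (esym : symmetric e) (rot : dart -> dart) (d : dart) : dart :=
  rot (rev_dart esym d).

Definition rotation_system (rot : dart -> dart) : Prop :=
  injective rot /\ (forall d, tail (rot d) = tail d) /\
  (forall d d', tail d = tail d' -> fconnect rot d d').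

Definition graph_connected : Prop := forall u v : V, connect e u v.

Definition bipartite : Prop := exists c : V -> bool, forall u v, e u v -> c u != c v.

(* A quadrangulation: simple connected bipartite graph with a plane embedding
   (rotation system satisfying Euler's formula V - E + F = 2), in which every
   face is bounded by a cycle of length 4 (face boundary walk has 4 darts with
   4 pairwise distinct vertices). *)
Definition quadrangulation (esym : symmetric e) (rot : dart -> dart) : Prop :=
  irreflexive e /\ graph_connected /\ bipartite /\ rotation_system rot /\
  (#|V| + fcard (face_succ esym rot) predT).*2 = #|{: dart}| + 4 /\
  (forall d, size (orbit (face_succ esym rot) d) = 4 /\
             uniq (map tail (orbit (face_succ esym rot) d))).

Definition on_common_face (esym : symmetric e) (rot : dart -> dart) (u w : V) : Prop :=
  exists d : dart, (u \in map tail (orbit (face_succ esym rot) d)) /\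
                   (w \in map tail (orbit (face_succ esym rot) d)).

Fixpoint walkb (n : nat) (u v : V) : bool :=
  if n is n'.+1 then [exists w, e u w && walkb n' w v] else u == v.

(* graph distance (for a connected graph it is < #|V|) *)
Definition dist (u v : V) : nat := find (fun k => walkb k u v) (iota 0 #|V|).

Definition ecc (v : V) : nat := \max_(u : V) dist v u.

Definition sphere (v : V) (i : nat) : {set V} := [set u | dist v u == i].

Definition active (v : V) (i : nat) (w : V) : bool :=
  (w \in sphere v i) && [exists x, (x \in sphere v i.+1) && e w x].

End Quad.

(* Main.v *)
Require Import Defs.
From mathcomp Require Import all_boot.
From mathcomp Require Import zify.
Set Implicit Arguments. Unset Strict Implicit.

Section Aux.
Variables (V : finType) (e : rel V).

Lemma walkbSr n u w : walkb e n.+1 u w -> exists2 y, walkb e n u y & e y w.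
Proof.
elim: n u => [|n IH] u /=.
  move=> /existsP [y /andP [Huy /eqP <-]]; by exists u.
move=> /existsP [y /andP [Huy Hy]].
have [z Hz Hzw] := IH _ Hy.
exists z => //=; apply/existsP; exists y; by apply/andP.
Qed.

Lemma walkbSr' n u y w : walkb e n u y -> e y w -> walkb e n.+1 u w.
Proof.
elim: n u => [|n IH] u /=.
  move=> /eqP -> Hyw; apply/existsP; exists w; by rewrite Hyw eqxx.
move=> /existsP [z /andP [Huz Hz]] Hyw; apply/existsP; exists z.
apply/andP; split=> //; exact: IH _ Hz Hyw.
Qed.

Lemma walkb_col (c : V -> bool) (hc : forall a b, e a b -> c a != c b) n u w :
  walkb e n u w -> c w = c u (+) odd n.
Proof.
elim: n u => [|n IH] u /=.
  by move=> /eqP ->; rewrite addbF.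
move=> /existsP [y /andP [Huy Hy]].
rewrite (IH _ Hy); move: (hc _ _ Huy).
by case: (c u); case: (c y); case: (odd n).
Qed.

Lemma path_walk p u : path e u p -> walkb e (size p) u (last u p).
Proof.
elim: p u => [|a p IH] u /=; first by [].
move=> /andP [Hua Hp]; apply/existsP; exists a; apply/andP; split=> //; exact: IH.
Qed.

Hypothesis hconn : graph_connected e.

Lemma walk_exists u w : exists2 k, k < #|V| & walkb e k u w.
Proof.
have /connectP [p Hp ->] := hconn u w.
case: (shortenP Hp) => p' Hp' Hu _.
exists (size p'); last exact: path_walk.
have := card_uniqP Hu; rewrite /= => Hs.
have := max_card (mem (u :: p')); rewrite Hs /=; by [].
Qed.

Lemma dist_has v u : has (fun k => walkb e k v u) (iota 0 #|V|).
Proof.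
have [k Hk Hw] := walk_exists v u.
apply/hasP; exists k => //; by rewrite mem_iota.
Qed.

Lemma dist_walk v u : walkb e (dist e v u) v u.
Proof.
have H := dist_has v u.
have := nth_find 0 H; rewrite nth_iota //.
by move: H; rewrite has_find size_iota.
Qed.

Lemma dist_min v u k : walkb e k v u -> dist e v u <= k.
Proof.
move=> Hw; rewrite leqNgt; apply/negP => Hlt.
have H := dist_has v u.
have Hs := H; rewrite has_find size_iota in Hs.
have := before_find 0 Hlt; rewrite nth_iota; last by apply: ltn_trans Hs.
by rewrite add0n Hw.
Qed.

Lemma dist_edge v a b : e a b -> dist e v b <= (dist e v a).+1.
Proof. move=> Hab; apply: dist_min; exact: walkbSr' (dist_walk v a) Hab. Qed.

End Aux.

Lemma iter_switch (T : Type) (f : T -> T) (P : pred T) n x :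
  P x -> ~~ P (iter n f x) -> exists m, P (iter m f x) && ~~ P (f (iter m f x)).
Proof.
elim: n => [|n IH] Px /=; first by rewrite Px.
case Pn: (P (iter n f x)) => Hn.
  by exists n; rewrite Pn Hn.
by apply: IH; rewrite ?Pn.
Qed.

Theorem lemma2p4 (V : finType) (e : rel V) (esym : symmetric e)
    (rot : dart e -> dart e) (Q : quadrangulation esym rot)
    (v : V) (i : nat) (hi1 : 1 <= i) (hi2 : i <= ecc e v - 1)
    (w : V) (hw : active e v i w) :
  exists w' : V, [/\ active e v i w', w' != w & on_common_face esym rot w w'].
Proof.
case: Q => Hirr [hconn [[c hc] [[rinj [rtail rconn]] [_ Hface]]]].
have dadj : forall a b, e a b ->
    dist e v b = (dist e v a).+1 \/ dist e v a = (dist e v b).+1.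
  move=> a b Hab.
  have h1 := dist_edge hconn v Hab.
  have h2 := dist_edge hconn v (etrans (esym b a) Hab).
  have ca := walkb_col hc (dist_walk hconn v a).
  have cb := walkb_col hc (dist_walk hconn v b).
  have hne : dist e v b != dist e v a.
    apply/negP => /eqP Heq; move: (hc _ _ Hab); by rewrite ca cb Heq eqxx.
  lia.
move: hw; rewrite /active inE => /andP [/eqP Hwi /existsP [x /andP [Hx Hwx]]].
rewrite inE in Hx; move/eqP: Hx => Hx.
case: i hi1 hi2 Hwi Hx => [//|j] _ _ Hwi Hx.
have := dist_walk hconn v w; rewrite Hwi => /walkbSr [y Hy Hyw].
have Hdy := dist_min hconn Hy.
pose d0 : dart e := exist _ (w, x) Hwx.
have Hwy : e w y by rewrite esym.
pose d1 : dart e := exist _ (w, y) Hwy.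
have Hc : fconnect rot d0 d1 by apply: rconn.
pose up (d : dart e) := dist e v (Defs.head d) == j.+2.
have Hup0 : up d0 by rewrite /up /Defs.head /= Hx.
have Hup1 : ~~ up d1 by rewrite /up /Defs.head /=; apply/eqP; lia.
have := @iter_switch _ rot up (findex rot d0 d1) d0 Hup0; rewrite iter_findex // => /(_ Hup1).
move=> [m /andP [Hupd Hnup]].
set d := iter m rot d0 in Hupd Hnup.
have Htd : tail d = w.
  rewrite /d; elim: m {Hupd Hnup d} => [|m IH] //=; by rewrite rtail.
set f := face_succ esym rot.
set f0 := rev_dart esym d.
have tailf : forall a, tail (f a) = Defs.head a by move=> a; rewrite /f /face_succ rtail.
have edart : forall a : dart e, e (tail a) (Defs.head a) by move=> a; exact: (valP a).
have ff0 : f f0 = rot d.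
  rewrite /f /face_succ /f0; congr (rot _); apply: val_inj => /=; by case: (val d).
have finj : injective f.
  move=> a b; rewrite /f /face_succ => /rinj H.
  move: (congr1 val H) => /= [h1 h2]; apply: val_inj.
  by rewrite [val a]surjective_pairing [val b]surjective_pairing h1 h2.
have [Hsz Huq] := Hface f0.
have Hord : order f f0 = 4 by rewrite -size_orbit.
have Horb : orbit f f0 = [:: f0; f f0; f (f f0); f (f (f f0))] by rewrite /orbit Hord.
have H4 : f (f (f (f f0))) = f0 by have := iter_order finj f0; rewrite Hord.
rewrite Horb ff0 /= in Huq.
set f2 := f (rot d) in Huq.
set f3 := f f2 in Huq.
have Htr : tail (rot d) = w by rewrite rtail.
rewrite ff0 in H4.
set y' := Defs.head (rot d).
have Hey' : e w y' by rewrite -Htr; exact: edart.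
have Hdy' : dist e v y' = j.
  move: Hnup; rewrite /up -/y' => /eqP Hn.
  case: (dadj _ _ Hey'); lia.
have Ht2 : tail f2 = y' by rewrite /f2 tailf.
set z := tail f3.
have Hz2 : Defs.head f2 = z by rewrite /z /f3 tailf.
have Hyz : e y' z by rewrite -Ht2 -Hz2; exact: edart.
set x' := Defs.head d.
have Hdx' : dist e v x' = j.+2 by apply/eqP.
have Hh3 : Defs.head f3 = x'.
  by rewrite -tailf /f3 /f2 H4.
have Hzx : e z x' by rewrite -Hh3; exact: edart.
have hz1 := dist_edge hconn v Hyz.
have hz2 := dist_edge hconn v Hzx.
have Hdz : dist e v z = j.+1.
  rewrite Hdy' in hz1; rewrite Hdx' ltnS in hz2; apply/eqP; by rewrite eqn_leq hz1 hz2.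
have Hzw : z != w.
  move: Huq; rewrite -/f2 -/f3 -/z Htr /= !inE.
  by case/and4P => _ /norP [_ Hwz] _ _; rewrite eq_sym.
exists z; split => //.
  rewrite /active inE Hdz eqxx /=; apply/existsP; exists x'.
  by rewrite inE Hdx' eqxx Hzx.
exists f0; rewrite Horb ff0 /= -/f2 -/f3 -/z Htr !inE eqxx.
by split; rewrite ?eqxx ?orbT.
Qed.
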